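(* Let $m,n$ be positive integers and $\mathbf a,\mathbf b\in\mathbb Z^{m+n-2}$. If $\mathbf a\succeq\mathbf b$, then $p_{A^{m,n}}(\mathbf a)\ge p_{A^{m,n}}(\mathbf b)$.
   Context: $\mathbf u\succeq\mathbf v$ means $u_i\ge v_i$ for every coordinate $i$. Vector partition function: for a $d\times r$ integer matrix $A$ with $\ker A\cap\mathbb R^r_{\ge0}=\{0\}$, $p_A(\mathbf b)=\#\{\mathbf x\in\mathbb Z^r_{\ge0}:A\mathbf x=\mathbf b\}$. Variables $s_0,\dots,s_{m-1},t_1,\dots,t_{n-2}$; $T=t_1\cdots t_{n-2}$; $x_i=s_1\cdots s_iT^i$ ($1\le i\le m-1$), $y_j=s_0s_1\cdots s_{m-1}T^{m-1}t_1\cdots t_{j-1}$ ($1\le j\le n-1$); $e(M)\in\mathbb Z^{m+n-2}$ is the exponent vector of a Laurent monomial $M$ (coordinates $s_0,\dots,s_{m-1},t_1,\dots,t_{n-2}$). $A^{m,n}$ is the $(m+n-2)\times(\binom{mn}2-\binom m2-\binom n2)$ matrix whose columns are the exponent vectors of the following monomials, with multiplicity: $y_j/x_i$ and $x_iy_j$; $x_i$ ($n-1$ times each); $y_j$ ($m-1$ times each); $x_iy_j/x_k$ ($i\ne k$); $x_iy_j/y_k$ ($j\ne k$); $x_ky_l/(x_iy_j)$ ($i<k$, $j\ne l$); $x_k/x_i$ ($i<k$, $n-1$ times each); $y_l/y_j$ ($j<l$, $m-1$ times each); here $i,k\in\{1,\dots,m-1\}$ and $j,l\in\{1,\dots,n-1\}$.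 *)

(* Defs.v *)
From HB Require Import structures.
From mathcomp Require Import all_boot all_order all_algebra.
From mathcomp Require Import finmap boolp classical_sets cardinality.
Set Implicit Arguments. Unset Strict Implicit. Unset Printing Implicit Defensive.
Import Order.TTheory GRing.Theory Num.Theory.
Local Open Scope ring_scope.

(* The count is the
   cardinality of the (finite, under the paper's standing hypothesis
   ker A ∩ R^r_{>=0} = 0) solution set; fset_set returns the empty set
   for infinite sets, so the value is only meaningful under that hypothesis. *)
Definition vpf (d r : nat) (A : 'M[int]_(d, r)) (b : 'cV[int]_d) : nat :=
  #|` fset_set [set x : 'cV[nat]_r | A *m map_mx (fun k : nat => k%:Z) x = b] |%fset.

(* Coordinates of Z^{m+n-2}, indexed by k : nat:
   k < m          <-> s_k      (k = 0, ..., m-1)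
   m <= k         <-> t_{k-m+1} (k = m, ..., m+n-3). *)

(* exponent vector of x_i = s_1 ... s_i T^i, T = t_1 ... t_{n-2} *)
Definition ex (m i : nat) (k : nat) : int :=
  if (k < m)%N then ((0 < k)%N && (k <= i)%N)%:R else i%:Z.

(* exponent vector of y_j = s_0 ... s_{m-1} T^{m-1} t_1 ... t_{j-1} *)
Definition ey (m j : nat) (k : nat) : int :=
  if (k < m)%N then 1 else (m.-1)%:Z + ((k.+2 <= j + m)%N)%:R.

Definition vadd (u v : nat -> int) : nat -> int := fun k => u k + v k.
Definition vsub (u v : nat -> int) : nat -> int := fun k => u k - v k.

(* The columns of A^{m,n} (as exponent vectors), with multiplicity.
   i, k range over {1, ..., m-1};  j, l range over {1, ..., n-1}. *)
Definition Acols (m n : nat) : seq (nat -> int) :=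
  let I := iota 1 m.-1 in
  let J := iota 1 n.-1 in
  [seq vsub (ey m j) (ex m i) | i <- I, j <- J] ++
  [seq vadd (ex m i) (ey m j) | i <- I, j <- J] ++
  flatten [seq nseq n.-1 (ex m i) | i <- I] ++
  flatten [seq nseq m.-1 (ey m j) | j <- J] ++
  flatten [seq [seq vsub (vadd (ex m i) (ey m j)) (ex m k) | k <- I & k != i]
             | i <- I, j <- J] ++
  flatten [seq [seq vsub (vadd (ex m i) (ey m j)) (ey m k) | k <- J & k != j]
             | i <- I, j <- J] ++
  flatten (flatten
    [seq [seq [seq vsub (vadd (ex m k) (ey m l)) (vadd (ex m i) (ey m j))
               | l <- J & l != j] | k <- I & (i < k)%N]
    | i <- I, j <- J]) ++
  flatten (flatten [seq [seq nseq n.-1 (vsub (ex m k) (ex m i)) | k <- I & (i < k)%N]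
                   | i <- I]) ++
  flatten (flatten [seq [seq nseq m.-1 (vsub (ey m l) (ey m j)) | l <- J & (j < l)%N]
                   | j <- J]).

Definition Amn (m n : nat) : 'M[int]_(m + n - 2, size (Acols m n)) :=
  \matrix_(k < m + n - 2, c < size (Acols m n))
     (nth (fun _ => 0) (Acols m n) c) k.

(* Main.v *)
Require Import Defs.
From HB Require Import structures.
From mathcomp Require Import all_boot all_order all_algebra.
From mathcomp Require Import finmap boolp classical_sets cardinality.
From mathcomp Require Import zify ring.
Import Order.TTheory GRing.Theory Num.Theory.
Local Open Scope ring_scope.

Definition wgt (m k : nat) : int := if k == 0%N then 1 else if (k < m)%N then 2 else 1.
Definition wt (m n : nat) (v : nat -> int) : int :=
  \sum_(0 <= k < m + n - 2) wgt m k * v k.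

Lemma wt_add m n u v : wt m n (vadd u v) = wt m n u + wt m n v.
Proof. by rewrite /wt -big_split; apply: eq_bigr => k _; rewrite /vadd mulrDr. Qed.
Lemma wt_sub m n u v : wt m n (vsub u v) = wt m n u - wt m n v.
Proof. by rewrite /wt -sumrB; apply: eq_bigr => k _; rewrite /vsub mulrBr. Qed.

Lemma sum_const_range (a b : nat) (F : nat -> int) (c : int) :
  (forall k, (a <= k < b)%N -> F k = c) -> \sum_(a <= k < b) F k = c * (b - a)%:Z.
Proof.
move=> h; rewrite (eq_big_nat _ _ h) sumr_const_nat.
by rewrite -mulr_natr natz.
Qed.

Lemma wt_ex m n i : (2 <= n)%N -> (1 <= i < m)%N -> wt m n (ex m i) = (n * i)%:Z.
Proof.
move=> hn /andP[i1 im]; rewrite /wt (big_cat_nat _ (n:=m)) //=; last by lia.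
rewrite big_ltn; last by lia.
rewrite (big_cat_nat _ (m:=1) (n:=i.+1)); [|lia|lia].
rewrite (@sum_const_range 1 i.+1 _ 2); last first.
  move=> k hk; rewrite /wgt /ex; have -> : (k == 0%N) = false by lia.
  have -> : (k < m)%N by lia.
  have -> : (0 < k <= i)%N by lia. by [].
rewrite (@sum_const_range i.+1 m _ 0); last first.
  move=> k hk; rewrite /wgt /ex; have -> : (k == 0%N) = false by lia.
  have -> : (k < m)%N by lia.
  have -> : (0 < k <= i)%N = false by lia. by rewrite mulr0.
rewrite (@sum_const_range m (m+n-2) _ i); last first.
  move=> k hk; rewrite /wgt /ex; have -> : (k == 0%N) = false by lia.
  have -> : (k < m)%N = false by lia. by rewrite mul1r.
rewrite /wgt /ex /=. 
have -> : (0 < m)%N by lia.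
rewrite mulr0 add0r mul0r addr0.
nia.
Qed.

Lemma wt_ey m n j : (2 <= m)%N -> (2 <= n)%N -> (1 <= j < n)%N -> wt m n (ey m j) = (n * m.-1 + j)%:Z.
Proof.
move=> hm hn /andP[j1 jn]; rewrite /wt (big_cat_nat _ (n:=m)) //=; last by lia.
rewrite big_ltn; last by lia.
rewrite (@sum_const_range 1 m _ 2); last first.
  move=> k hk; rewrite /wgt /ey; have -> : (k == 0%N) = false by lia.
  have -> : (k < m)%N by lia. by [].
rewrite (big_cat_nat _ (m:=m) (n:=(m + j).-1)); [|lia|lia].
rewrite (@sum_const_range m (m + j).-1 _ (m.-1 + 1)%:Z); last first.
  move=> k hk; rewrite /wgt /ey; have -> : (k == 0%N) = false by lia.
  have -> : (k < m)%N = false by lia. 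
  have -> : (k.+2 <= j + m)%N by lia. by rewrite mul1r.
rewrite (@sum_const_range (m + j).-1 (m+n-2) _ (m.-1)%:Z); last first.
  move=> k hk; rewrite /wgt /ey; have -> : (k == 0%N) = false by lia.
  have -> : (k < m)%N = false by lia. 
  have -> : (k.+2 <= j + m)%N = false by lia. by rewrite mul1r addr0.
rewrite /wgt /ey /=. 
have -> : (0 < m)%N by lia.
rewrite mul1r.
nia.
Qed.

Lemma all_flattenE (T : Type) (P : pred T) (ss : seq (seq T)) :
  all P (flatten ss) = all (all P) ss.
Proof. by elim: ss => //= s ss IH; rewrite all_cat IH. Qed.
Lemma has_flattenE (T : Type) (P : pred T) (ss : seq (seq T)) :
  has P (flatten ss) = has (has P) ss.
Proof. by elim: ss => //= s ss IH; rewrite has_cat IH. Qed.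

Lemma wt_pos m n : (2 <= m)%N -> (2 <= n)%N -> all (fun v => 0 < wt m n v) (Acols m n).
Proof.
move=> hm hn.
have hI : forall i, i \in iota 1 m.-1 -> (1 <= i < m)%N by move=> i; rewrite mem_iota; lia.
have hJ : forall i, i \in iota 1 n.-1 -> (1 <= i < n)%N by move=> i; rewrite mem_iota; lia.
rewrite /Acols !all_cat !all_flattenE !all_map.
repeat (apply/andP; split).
- apply/allP => i /hI Hi /=; rewrite all_map; apply/allP => j /hJ Hj /=.
  rewrite wt_sub wt_ex // wt_ey //; nia.
- apply/allP => i /hI Hi /=; rewrite all_map; apply/allP => j /hJ Hj /=.
  rewrite wt_add wt_ex // wt_ey //; nia.
- apply/allP => i /hI Hi /=; rewrite all_nseq; apply/orP; right.
  rewrite wt_ex //; nia.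
- apply/allP => j /hJ Hj /=; rewrite all_nseq; apply/orP; right.
  rewrite wt_ey //; nia.
- apply/allP => i /hI Hi /=; rewrite ?all_map; apply/allP => j /hJ Hj /=.
  rewrite ?all_map; apply/allP => k; rewrite mem_filter => /andP[_ /hI Hk] /=.
  rewrite wt_sub wt_add !wt_ex // wt_ey //; nia.
- apply/allP => i /hI Hi /=; rewrite ?all_map; apply/allP => j /hJ Hj /=.
  rewrite ?all_map; apply/allP => k; rewrite mem_filter => /andP[/eqP kj /hJ Hk] /=.
  rewrite wt_sub wt_add !wt_ex // !wt_ey //; nia.
- apply/allP => i /hI Hi /=; rewrite ?all_flattenE ?all_map; apply/allP => j /hJ Hj /=.
  rewrite ?all_map; apply/allP => k; rewrite mem_filter => /andP[ik /hI Hk] /=.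
  rewrite ?all_map; apply/allP => l; rewrite mem_filter => /andP[/eqP lj /hJ Hl] /=.
  rewrite wt_sub !wt_add !wt_ex // !wt_ey //; nia.
- apply/allP => i /hI Hi /=; rewrite ?all_flattenE ?all_map; apply/allP => k; rewrite mem_filter => /andP[ik /hI Hk] /=.
  rewrite all_nseq; apply/orP; right. rewrite wt_sub !wt_ex //; nia.
- apply/allP => j /hJ Hj /=; rewrite ?all_flattenE ?all_map; apply/allP => l; rewrite mem_filter => /andP[jl /hJ Hl] /=.
  rewrite all_nseq; apply/orP; right. rewrite wt_sub !wt_ey //; nia.
Qed.

Ltac crunch := repeat match goal with
 | |- context [if ?b then _ else _] => let E := fresh "E" in case E: b
 | |- context [nat_of_bool ?b] => lazymatch b with true => fail | false => fail | _ => let E := fresh "E" in case E: b end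
end; rewrite /= ?natz; lia.

Ltac R := apply/orP; right.
Ltac L := apply/orP; left.
Ltac pick x := apply/hasP; exists x; [rewrite ?mem_filter mem_iota; try (apply/andP; split); lia | rewrite /= ?has_flattenE ?has_map /=].
Ltac fin := rewrite ?has_nseq; try (apply/andP; split; [lia|]);
  apply/allP => k'; rewrite mem_iota => hk'; rewrite /vsub /vadd /ey /ex; apply/eqP; crunch.

Lemma unit_col m n k : (2 <= m)%N -> (2 <= n)%N -> (k < m + n - 2)%N ->
  has (fun v => all (fun k' => v k' == (k' == k)%:R) (iota 0 (m + n - 2))) (Acols m n).
Proof.
move=> hm hn hk; rewrite /Acols !has_cat.
have [k0|kpos] := eqVneq k 0%N.
  L; rewrite has_flattenE has_map; pick m.-1; pick 1%N; fin.
have [km|km] := ltnP k m.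
  have [n2|n3] := eqVneq n 2%N.
    have [k1|k2] := eqVneq k 1%N.
      R; R; L; rewrite has_flattenE has_map; pick 1%N; fin.
    do 7 R; L; rewrite ?has_flattenE ?has_map; pick k.-1; pick k; fin.
  have [k1|k2] := eqVneq k 1%N.
    do 5 R; L; rewrite ?has_flattenE ?has_map; pick 1%N; pick 1%N; pick n.-1; fin.
  do 6 R; L; rewrite ?has_flattenE ?has_map; pick k.-1; pick n.-1; pick k; pick 1%N; fin.
do 8 R; rewrite ?has_flattenE ?has_map; pick (k - m).+1; pick (k - m).+2; fin.
Qed.

Lemma A_unit m n : (2 <= m)%N -> (2 <= n)%N -> forall k : 'I_(m + n - 2),
  exists c : 'I_(size (Acols m n)), forall k' : 'I_(m + n - 2), Amn m n k' c = (k' == k)%:R.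
Proof.
move=> hm hn k.
have /(has_nthP (fun _ => 0)) [c hc hP] := @unit_col m n k hm hn (ltn_ord k).
exists (Ordinal hc) => k'; rewrite mxE /=.
have /allP /(_ k') := hP; rewrite mem_iota /= => /(_ (ltn_ord k')) /eqP ->.
by [].
Qed.

Lemma A_wt m n : (2 <= m)%N -> (2 <= n)%N -> forall c : 'I_(size (Acols m n)),
  0 < \sum_(k < m + n - 2) wgt m k * Amn m n k c.
Proof.
move=> hm hn c.
have /(all_nthP (fun _ => 0)) /(_ c (ltn_ord c)) := @wt_pos m n hm hn.
rewrite /wt big_mkord; congr (0 < _); apply: eq_bigr => k _; by rewrite mxE.
Qed.

Lemma sol_bound d r (A : 'M[int]_(d, r)) (w : nat -> int) (b : 'cV[int]_d) x :
  (forall c : 'I_r, 0 < \sum_(k < d) w k * A k c) ->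
  A *m map_mx (fun k : nat => k%:Z) x = b ->
  forall c : 'I_r, (x c 0)%:Z <= \sum_(k < d) w k * b k 0.
Proof.
move=> hw hx c.
have -> : \sum_(k < d) w k * b k 0 = \sum_(c' < r) (x c' 0)%:Z * \sum_(k < d) w k * A k c'.
  rewrite -hx.
  under eq_bigr => k _ do rewrite mxE big_distrr.
  rewrite exchange_big /=; apply: eq_bigr => c' _.
  rewrite big_distrr /=; apply: eq_bigr => k _; rewrite mxE; ring.
rewrite (bigD1 c) //=.
have h1 : (x c 0)%:Z <= (x c 0)%:Z * \sum_(k < d) w k * A k c.
  by apply: ler_peMr => //; rewrite -gtz0_ge1.
apply: (le_trans h1); rewrite lerDl; apply: sumr_ge0 => c' _.
apply: mulr_ge0 => //; exact: ltW.
Qed.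

Lemma sol_finite d r (A : 'M[int]_(d, r)) (w : nat -> int) (b : 'cV[int]_d) :
  (forall c : 'I_r, 0 < \sum_(k < d) w k * A k c) ->
  finite_set [set x : 'cV[nat]_r | A *m map_mx (fun k : nat => k%:Z) x = b].
Proof.
move=> hw.
set B := absz (\sum_(k < d) w k * b k 0).
apply: (@sub_finite_set _ _ ((fun y : 'cV['I_B.+1]_r => map_mx (@nat_of_ord _) y) @` setT)).
  move=> x /= hx; exists (map_mx (fun k => inord k) x) => //.
  apply/matrixP => i j; rewrite !mxE inordK //.
  have := @sol_bound d r A w b x hw hx i; rewrite (ord1 j); rewrite /B; lia.
apply: finite_image; exact: finite_finset.
Qed.

Theorem mainTheorem12 (m n : nat) (hm : (2 <= m)%N) (hn : (2 <= n)%N)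
    (a b : 'cV[int]_(m + n - 2)) :
  (forall i : 'I_(m + n - 2), b i 0 <= a i 0) ->
  (vpf (Amn m n) b <= vpf (Amn m n) a)%N.
Proof.
move=> hab.
set N := (m + n - 2)%N in a b hab *.
set r := size (Acols m n).
set A := Amn m n.
have hw := @A_wt m n hm hn.
have [f hf0] := fin_all_exists (@A_unit m n hm hn).
have hf : forall x k', A k' (f x) = (k' == x)%:R := hf0.
have hw' : forall c : 'I_r, 0 < \sum_(k < N) wgt m k * A k c := hw.
clearbody A; clear hf0 hw.
pose dd (k : 'I_N) := absz (a k 0 - b k 0)%R.
have hdd : forall k, (dd k)%:Z = a k 0 - b k 0.
  by move=> k; rewrite /dd abszE ger0_norm // subr_ge0.
pose w0 : 'cV[nat]_r := \col_c (\sum_(k < N | f k == c) dd k)%N.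
pose g (x : 'cV[nat]_r) := x + w0.
have ginj : injective g.
  move=> x y /matrixP hxy; apply/matrixP => i j; have := hxy i j; rewrite !mxE; exact: addIn.
have hAw : A *m map_mx (fun k : nat => k%:Z) w0 = a - b.
  apply/matrixP => i j; rewrite (ord1 j) !mxE.
  under eq_bigr => c _ do rewrite !mxE -natz natr_sum big_distrr /=.
  transitivity (\sum_(k < N) A i (f k) * (dd k)%:R).
    rewrite (partition_big f xpredT) //=; apply: eq_bigr => c _; apply: eq_big => k // /eqP ->.
    by [].

  rewrite (bigD1 i) //= big1 ?addr0; last first.
    by move=> k hk; rewrite hf eq_sym (negbTE hk) mul0r.
  by rewrite hf eqxx mul1r natz hdd.
pose Sb := [set x : 'cV[nat]_r | A *m map_mx (fun k : nat => k%:Z) x = b]%classic.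
pose Sa := [set x : 'cV[nat]_r | A *m map_mx (fun k : nat => k%:Z) x = a]%classic.
have fSb : finite_set Sb by apply: (@sol_finite _ _ _ (wgt m) _ hw').
have fSa : finite_set Sa by apply: (@sol_finite _ _ _ (wgt m) _ hw').
have sub : (g @` Sb `<=` Sa)%classic.
  move=> _ [x /= hx <-]; rewrite /Sa /= /g.
  have -> : map_mx (fun k : nat => k%:Z) (x + w0) = map_mx (fun k : nat => k%:Z) x + map_mx (fun k : nat => k%:Z) w0.
    by apply/matrixP => i j; rewrite !mxE.
  by rewrite mulmxDr hx hAw addrC subrK.
rewrite /vpf -/Sa -/Sb.
have -> : #|` fset_set Sb|%fset = #|` fset_set (g @` Sb)|%fset.
  rewrite fset_set_image // card_imfset //.
apply: fsubset_leq_card.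
by rewrite -fset_set_sub //; apply: finite_image.
Qed.
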